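(* Let $N_1=(V_1,E_1)$ and $N_2=(V_2,E_2)$ be phylogenetic networks on the same set $S$ of taxa. For every $v_1\in V_1$ and $v_2\in V_2$, if $\ell(v_1)=\ell(v_2)$, then $\mu(v_1)=\mu(v_2)$.
   Context: A phylogenetic network on $S=\{1,\dots,n\}$ is a finite rooted directed acyclic graph whose leaves are bijectively labeled by $S$. For a node $v$ and $i\in S$, $m_i(v)$ is the number of distinct directed paths from $v$ to the leaf $i$, and $\mu(v)=(m_1(v),\dots,m_n(v))$. The nested label $\ell(v)$ is defined by induction on height (largest length of a path to a leaf): $\ell(v)=\{i\}$ for the leaf labeled $i$, and otherwise $\ell(v)$ is the multiset of nested labels of the children of $v$. *)

(* Defs.v *)
From Stdlib Require Import List Permutation.
From mathcomp Require Import all_boot.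
Set Implicit Arguments. Unset Strict Implicit. Unset Printing Implicit Defensive.

(* A network: vertex set V (a finType), edge relation e (u -> v iff e u v),
   leaf labelling lbl : V -> 'I_n (taxa {1..n} represented as 0..n-1). *)

Definition is_leaf (V : finType) (e : rel V) (v : V) : bool :=
  ~~ [exists u, e v u].

Definition phylo_network (n : nat) (V : finType) (e : rel V) (lbl : V -> 'I_n) : Prop :=
  [/\ (forall u v, e u v -> ~~ connect e v u),
      (exists r : V, forall v, connect e r v),
      {in is_leaf e &, injective lbl} &
      (forall i : 'I_n, exists2 v, is_leaf e v & lbl v = i)].

(* number of distinct directed paths from v to w: a directed path in a DAG
   has fewer than #|V| edges; a path is the sequence of vertices after v *)
Definition npaths (V : finType) (e : rel V) (v w : V) : nat :=
  \sum_(k < #|V|) #|[set t : k.-tuple V | path e v t && (last v t == w)]|.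

Definition mu (n : nat) (V : finType) (e : rel V) (lbl : V -> 'I_n) (v : V)
  : {ffun 'I_n -> nat} :=
  [ffun i => \sum_(w | is_leaf e w && (lbl w == i)) npaths e v w].

(* nested labels: finite rooted trees; node children form a multiset *)
Inductive nlabel : Type :=
| NLeaf : nat -> nlabel
| NNode : list nlabel -> nlabel.

Inductive nl_eq : nlabel -> nlabel -> Prop :=
| nl_eq_leaf i : nl_eq (NLeaf i) (NLeaf i)
| nl_eq_node (s t t' : list nlabel) :
    Permutation t t' -> Forall2 nl_eq s t' -> nl_eq (NNode s) (NNode t).

(* ell with fuel k; correct whenever k > height of v (k = #|V| suffices in a DAG) *)
Fixpoint ell_fuel (n : nat) (V : finType) (e : rel V) (lbl : V -> 'I_n) (k : nat) (v : V)
  : nlabel :=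
  match k with
  | 0 => NNode nil
  | k'.+1 => if is_leaf e v then NLeaf (val (lbl v)).+1
             else NNode [seq ell_fuel e lbl k' u | u <- enum [pred u | e v u]]
  end.

Definition ell (n : nat) (V : finType) (e : rel V) (lbl : V -> 'I_n) (v : V) : nlabel :=
  ell_fuel e lbl #|V| v.

(* Main.v *)
Require Import Defs.
From Stdlib Require Import List Permutation.
From mathcomp Require Import all_boot.

Section Net.
Variables (V : finType) (e : rel V).
Hypothesis acyc : forall u v, e u v -> ~~ connect e v u.

Lemma path_uniq v t : path e v t -> uniq (v :: t).
Proof.
elim: t v => [|u t IH] v; first by [].
move=> /andP[evu pu].
rewrite cons_uniq (IH u pu) andbT; apply/negP=> vin.
have := path_connect pu vin.
by rewrite (negbTE (acyc _ _ evu)).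
Qed.

Lemma path_size v t : path e v t -> size t < #|V|.
Proof.
move=> /path_uniq /card_uniqP H.
have := max_card (mem (v :: t)). by rewrite H.
Qed.

Definition Q m v w := \sum_(t : m.-tuple V) (path e v t && (last v t == w) : nat).

Lemma card_Q m v w : #|[set t : m.-tuple V | path e v t && (last v t == w)]| = Q m v w.
Proof.
rewrite cardsE -sum1_card /Q big_mkcond /=; apply: eq_bigr => t _.
by rewrite unfold_in; case: (_ && _).
Qed.

Lemma Q0 v w : Q 0 v w = (v == w).
Proof.
rewrite /Q (big_pred1 [tuple]) /=; last by move=> t; apply/esym/eqP; exact: tuple0.
by rewrite eq_sym.
Qed.

Lemma sum_tupleS m (F : m.+1.-tuple V -> nat) :
  \sum_(t : m.+1.-tuple V) F t = \sum_(x : V) \sum_(t : m.-tuple V) F [tuple of x :: t].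
Proof.
rewrite pair_big /=.
rewrite (reindex (fun p : V * m.-tuple V => [tuple of p.1 :: p.2])) //=.
exists (fun t : m.+1.-tuple V => (thead t, [tuple of behead t])).
  by move=> [x t] _; rewrite theadE; congr pair; apply: val_inj.
by move=> t _; rewrite [in RHS](tuple_eta t).
Qed.

Lemma QS m v w : Q m.+1 v w = \sum_(u | e v u) Q m u w.
Proof.
rewrite /Q sum_tupleS [in RHS]big_mkcond /=; apply: eq_bigr => x _.
case: (e v x) => /=; first by [].
by rewrite big1.
Qed.

Lemma Q_big m v w : #|V| <= m -> Q m v w = 0.
Proof.
move=> Hm; rewrite /Q big1 // => t _.
case Hp: (path e v t) => //=.
have := @path_size _ _ Hp; rewrite size_tuple => H.
by have := leq_trans H Hm; rewrite ltnn.
Qed.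


Lemma npaths_rec v w : npaths e v w = (v == w) + \sum_(u | e v u) npaths e u w.
Proof.
have -> : npaths e v w = \sum_(0 <= k < #|V|.+1) Q k v w.
  rewrite big_nat_recr //= Q_big // addn0 big_mkord.
  by apply: eq_bigr => k _; rewrite card_Q.
rewrite big_nat_recl // Q0; congr addn.
have -> : \sum_(0 <= k < #|V|) Q k.+1 v w = \sum_(0 <= k < #|V|) \sum_(u | e v u) Q k u w.
  by apply: eq_bigr => k _; rewrite QS.
rewrite exchange_big /=; apply: eq_bigr => u _.
rewrite /npaths big_mkord; apply: eq_bigr => k _; by rewrite card_Q.
Qed.


Variables (n : nat) (lbl : V -> 'I_n).

Lemma mu_leaf v : is_leaf e v -> mu e lbl v = [ffun i => ((lbl v == i) : nat)].
Proof.
move=> Hl; have Hno : forall u, ~~ e v u by apply/existsPn.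
apply/ffunP => i; rewrite !ffunE.
have Hz : forall w, npaths e v w = (v == w).
  by move=> w; rewrite npaths_rec big_pred0 ?addn0 // => u; apply/negbTE.
under eq_bigr => w _ do rewrite Hz.
case H: (lbl v == i).
  rewrite (bigD1 v) /=; last by rewrite Hl H.
  rewrite eqxx big1 // => w /andP[_ ne]; by rewrite eq_sym (negbTE ne).
rewrite big1 // => w /andP[_ /eqP lw].
case E: (v == w) => //; move/eqP: E => E; subst w.
by rewrite lw eqxx in H.
Qed.

Lemma mu_node v i : ~~ is_leaf e v ->
  mu e lbl v i = \sum_(u <- enum [pred u | e v u]) mu e lbl u i.
Proof.
move=> Hl; rewrite ffunE.
under eq_bigr => w _ do rewrite npaths_rec.
rewrite big_split /= [X in X + _]big1 ?add0n; last first.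
  move=> w /andP[lw _]; case E: (v == w) => //; move/eqP: E => E; subst w.
  by rewrite lw in Hl.
rewrite exchange_big big_enum /=; apply: eq_bigr => u _; by rewrite ffunE.
Qed.

End Net.

Lemma map_list (A B : Type) (f : A -> B) s : seq.map f s = List.map f s.
Proof. by elim: s => //= x s ->. Qed.

Lemma In_mem (T : eqType) (x : T) s : In x s -> x \in s.
Proof.
elim: s => //= y s IH [E|H]; rewrite inE.
  by rewrite E eqxx.
by rewrite (IH H) orbT.
Qed.

Lemma F2_map (A B C D : Type) (R : C -> D -> Prop) (Q : A -> B -> Prop)
  (f : A -> C) (g : B -> D) s s' :
  (forall x y, In x s -> In y s' -> R (f x) (g y) -> Q x y) ->
  Forall2 R (List.map f s) (List.map g s') -> Forall2 Q s s'.
Proof.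
elim: s s' => [|x s IH] [|y s'] H F; inversion F; subst; try by constructor.
constructor; first by apply: H => /=; auto.
apply: IH => // a b Ha Hb; apply: H => /=; auto.
Qed.

Lemma sum_F2 (A B : Type) (f : A -> nat) (g : B -> nat) s s' :
  Forall2 (fun x y => f x = g y) s s' -> \sum_(x <- s) f x = \sum_(y <- s') g y.
Proof. elim=> [|x y s1 s2 Hxy _ IH]; by rewrite ?big_nil // !big_cons Hxy IH. Qed.

Lemma sum_perm (A : Type) (f : A -> nat) s s' :
  Permutation s s' -> \sum_(x <- s) f x = \sum_(x <- s') f x.
Proof.
elim=> [|x l l' _ IH|x y l|l l' l'' _ IH1 _ IH2].
- by [].
- by rewrite !big_cons IH.
- by rewrite !big_cons addnCA.
- by rewrite IH1 IH2.
Qed.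

Lemma main_lem n (V1 : finType) (e1 : rel V1) (l1 : V1 -> 'I_n)
  (V2 : finType) (e2 : rel V2) (l2 : V2 -> 'I_n)
  (a1 : forall u v, e1 u v -> ~~ connect e1 v u)
  (a2 : forall u v, e2 u v -> ~~ connect e2 v u) :
  forall k1 v1 k2 v2, (forall t, path e1 v1 t -> size t < k1) ->
  (forall t, path e2 v2 t -> size t < k2) ->
  nl_eq (ell_fuel e1 l1 k1 v1) (ell_fuel e2 l2 k2 v2) -> mu e1 l1 v1 = mu e2 l2 v2.
Proof.
elim=> [|k1 IH] v1 k2 v2 B1 B2 H; first by have := B1 [::] isT.
case: k2 B2 H => [|k2] B2 H; first by have := B2 [::] isT.
rewrite /= in H.
case L1: (is_leaf e1 v1) H; case L2: (is_leaf e2 v2) => H; inversion H; subst.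
- by rewrite (@mu_leaf _ _ a1) // (@mu_leaf _ _ a2) // (val_inj H2).
- set c1 := enum [pred u | e1 v1 u] in H3 *.
  set c2 := enum [pred u | e2 v2 u] in H2 *.
  rewrite map_list in H2; rewrite map_list in H3.
  have [l3 [Et Hp]] := Permutation_map_inv _ _ (Permutation_sym H2).
  subst t'.
  have F : Forall2 (fun x y => mu e1 l1 x = mu e2 l2 y) c1 l3.
    apply: F2_map H3 => x y Hx Hy; apply: IH.
    + move: (In_mem _ _ _ Hx); rewrite mem_enum => ex t pt.
      by apply: (B1 (x :: t)); apply/andP.
    + have := In_mem _ _ _ (Permutation_in _ (Permutation_sym Hp) Hy).
      rewrite mem_enum => ey t pt.
      by apply: (B2 (y :: t)); apply/andP.
  apply/ffunP => i.
  rewrite (@mu_node _ _ a1) ?L1 // (@mu_node _ _ a2) ?L2 // -/c1 -/c2.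
  rewrite (sum_perm _ _ _ _ Hp); apply: sum_F2.
  by apply: Forall2_impl F => x y ->.
Qed.

Theorem corollary1 (n : nat)
  (V1 : finType) (e1 : rel V1) (lbl1 : V1 -> 'I_n)
  (V2 : finType) (e2 : rel V2) (lbl2 : V2 -> 'I_n) :
  phylo_network e1 lbl1 -> phylo_network e2 lbl2 ->
  forall (v1 : V1) (v2 : V2),
    nl_eq (ell e1 lbl1 v1) (ell e2 lbl2 v2) -> mu e1 lbl1 v1 = mu e2 lbl2 v2.
Proof.
move=> [a1 _ _ _] [a2 _ _ _] v1 v2 H.
apply: (main_lem _ _ _ _ _ _ _ a1 a2 #|V1| v1 #|V2| v2) H.
- by move=> t; exact: (path_size _ _ a1).
- by move=> t; exact: (path_size _ _ a2).
Qed.
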